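(* Let $\mathbf p$ be a reproduction law with $p_0=0$, $p_1<1$, let $\Gamma$ take values in $(1,\infty)$, and let $T$ be a $(\Gamma,\mathbf p)$-Galton–Watson tree with recursive lengths. Let $\phi$ and $\kappa$ be as defined below. Assume that $\mathbb E[\kappa(\phi(T))]$ and $\sum_{k\ge1}p_kk$ are finite. Then $\mathbb E[-\log(1-\Gamma_\varnothing^{-1})\,\kappa(\phi(T))]$ is finite if and only if $\mathbb E[-\log(1-\Gamma_\varnothing^{-1})]$ is finite.
   Context: Trees are leafless rooted planar trees encoded by finite words, root $\varnothing$, with an artificial parent $\varnothing_*$ of the root; a $(\Gamma,\mathbf p)$-Galton–Watson tree carries i.i.d. marks $\Gamma_x$. The random walk on $T\cup\{\varnothing_*\}$ goes from $\varnothing_*$ to $\varnothing$ with probability 1, and from $x$ to child $xi$ with probability $\Gamma_{xi}/(\Gamma_x-1+\sum_j\Gamma_{xj})$ and to its parent with probability $(\Gamma_x-1)/(\Gamma_x-1+\sum_j\Gamma_{xj})$. $\beta(T)$ is the probability that this walk started at $\varnothing$ never hits $\varnothing_*$, $\phi(T)=\Gamma_\varnothing\beta(T)$, and for $u>1$, $\kappa(u)=\mathbb E[uS/(u-1+S)]$ with $S=\sum_{j=1}^{\nu_{\tilde T}(\varnothing)}\phi(\tilde T[j])$, $\tilde T$ an independent copy of $T$. *)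

(* Defs.v *)
From HB Require Import structures.
From mathcomp Require Import all_boot all_order all_algebra.
From mathcomp Require Import all_classical all_reals all_analysis.
Set Implicit Arguments. Unset Strict Implicit. Unset Printing Implicit Defensive.
Import Order.TTheory GRing.Theory Num.Theory.
Import numFieldNormedType.Exports.
Local Open Scope classical_set_scope.
Local Open Scope ring_scope.

(* Ulam–Harris words, written root-first: the child number i of x is rcons x i
   (children of x are numbered 0, ..., nu x - 1).
   A marked tree is given by nu : word -> nat (number of children) and
   G : word -> R (marks Gamma_x); the tree T is the set of words reachable
   from [::] with letters below the number of children. *)
Definition word := seq nat.

Section Walk.
Variable R : realType.

(* parent in T ∪ {root_*}; None is the artificial parent root_* *)
Definition parent (x : word) : option word :=
  if x is [::] then None else Some (take (size x).-1 x).

(* hitp nu G n v = probability that the random walk on T ∪ {root_*}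
   started at v has visited root_* within the first n steps. *)
Fixpoint hitp (nu : word -> nat) (G : word -> R) (n : nat) (v : option word)
  : R :=
  match n with
  | 0 => if v is None then 1 else 0
  | n'.+1 =>
    match v with
    | None => 1
    | Some x =>
      let D := G x - 1 + \sum_(i < nu x) G (rcons x i) in
      (G x - 1) / D * hitp nu G n' (parent x)
      + \sum_(i < nu x) (G (rcons x i) / D * hitp nu G n' (Some (rcons x i)))
    end
  end.

Definition beta (nu : word -> nat) (G : word -> R) : R :=
  1 - limn (fun n => hitp nu G n (Some [::])).

Definition phi (nu : word -> nat) (G : word -> R) : R := G [::] * beta nu G.

(* subtree T[j] rooted at the child j of the root *)
Definition shift {A} (f : word -> A) (j : nat) : word -> A :=
  fun y => f (j :: y).

Definition Ssum (nu : word -> nat) (G : word -> R) : R :=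
  \sum_(j < nu [::]) phi (shift nu j) (shift G j).

End Walk.

(* kappa(u) = E[u S / (u - 1 + S)], S computed on a tree with the same law as
   T (the independent copy only serves to make kappa a deterministic function). *)
Definition kappa (R : realType) d (Omega : measurableType d)
  (P : probability Omega R) (nu : word -> Omega -> nat) (G : word -> Omega -> R)
  (u : R) : \bar R :=
  (\int[P]_w ((u * Ssum (fun x => nu x w) (fun x => G x w)
               / (u - 1 + Ssum (fun x => nu x w) (fun x => G x w)))%:E))%E.

(* (nu_x, Gamma_x)_{x word} are i.i.d., nu_x ~ p, Gamma_x ~ mu, nu_x independent
   of Gamma_x: the product rule over every finite family of distinct words. *)
Definition iid_marked_GW (R : realType) d (Omega : measurableType d)
  (P : probability Omega R) (p : nat -> R) (mu : probability R R)
  (nu : word -> Omega -> nat) (G : word -> Omega -> R) : Prop :=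
  forall (n : nat) (x : 'I_n -> word) (k : 'I_n -> nat) (A : 'I_n -> set R),
    injective x -> (forall i, measurable (A i)) ->
    P (\bigcap_(i in [set: 'I_n]) [set w | nu (x i) w = k i /\ G (x i) w \in A i])
    = (\prod_(i < n) (p (k i) * fine (mu (A i))))%:E.

(* Main.v *)
Require Import Defs.
From HB Require Import structures.
From mathcomp Require Import all_boot all_order all_algebra.
From mathcomp Require Import all_classical all_reals all_analysis.
From mathcomp Require Import measurable_realfun.
From mathcomp Require Import ring lra.
Import Order.TTheory GRing.Theory Num.Theory.
Import numFieldNormedType.Exports.
Local Open Scope classical_set_scope.
Local Open Scope ring_scope.


Lemma Lr_eq (R : realType) (g : R) : 1 < g -> - ln (1 - g^-1) = ln g - ln (g - 1).
Proof.
move=> g1; have g0 : 0 < g by lra.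
have g10 : 0 < g - 1 by lra.
have -> : 1 - g^-1 = (g - 1) * g^-1.
  by rewrite mulrBl mulfV ?mul1r // gt_eqF.
rewrite lnM ?posrE ?invr_gt0 // lnV ?posrE //; lra.
Qed.

Lemma Lr_ge0 (R : realType) (g : R) : 1 < g -> 0 <= - ln (1 - g^-1).
Proof.
move=> g1; rewrite oppr_ge0; apply: ln_le0.
rewrite lerBlDr lerDl invr_ge0; lra.
Qed.

Lemma Lr_le1 (R : realType) (g : R) : 2 < g -> - ln (1 - g^-1) <= 1.
Proof.
move=> g2; have g0 : 0 < g by lra.
have gi : g^-1 < 2^-1 by rewrite ltf_pV2 ?posrE //; lra.
have e2 : 2 <= expR (1 : R) by have := expR_ge1Dx (1 : R); lra.
have ei : expR (-1 : R) <= 2^-1.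
  by rewrite expRN lef_pV2 ?posrE ?expR_gt0 //; lra.
have y0 : 0 < 1 - g^-1 by lra.
rewrite lerNl -[X in X <= _](expRK (-1 : R)) ler_ln ?posrE ?expR_gt0 //; lra.
Qed.

Section Inner.
Local Open Scope ereal_scope.
Context (R : realType) d (T : measurableType d) (mu : {measure set T -> \bar R}).
Import HBNNSimple.

Definition SS (F : T -> \bar R) := ereal_sup [set sintegral mu h |
  h in [set h : {nnsfun T >-> R} | forall x, (h x)%:E <= F x]].

Lemma integralSS f : \int[mu]_x f x = SS (f ^\+) - SS (f ^\-).
Proof. by rewrite /integral patch_setT. Qed.

Lemma SS_ge0 F : (forall x, 0 <= F x) -> 0 <= SS F.
Proof.
move=> F0; apply: ereal_sup_ubound; exists nnsfun0 => //; last exact: sintegral0.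
Qed.

Lemma mfunE (h : {nnsfun T >-> R}) : measurable_fun setT (fun x => (h x)%:E).
Proof. exact: ((measurable_EFinP setT h).2 (measurable_funPT h)). Qed.

Lemma SS_le_ae F g N : measurable N -> mu N = 0 ->
  measurable_fun setT g -> (forall x, 0 <= g x) ->
  (forall x, ~ N x -> F x <= g x) -> SS F <= \int[mu]_x g x.
Proof.
move=> mN N0 mg g0 Fg; apply: ub_ereal_sup => _ [h hF <-].
have := integral_nnsfun mu measurableT h; rewrite patch_setT => <-.
apply: ae_ge0_le_integral => //.
- by move=> x _; rewrite lee_fin; exact: fun_ge0.
- exact: mfunE.
- exists N; split => // x /= nP; apply: contrapT => Nx.
  by apply: nP => _; exact: le_trans (hF x) (Fg x Nx).
Qed.
Arguments SS_le_ae {F g N}.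


Lemma SS0 F N : measurable N -> mu N = 0 -> (forall x, 0 <= F x) ->
  (forall x, ~ N x -> F x <= 0) -> SS F = 0.
Proof.
move=> mN N0 F0 FN; apply/eqP; rewrite eq_le SS_ge0 // andbT.
apply: le_trans (@SS_le_ae F (cst 0) N mN N0 _ _ _) _ => //.
by rewrite integral0.
Qed.
Arguments SS0 {F N}.


Lemma SS_ge_meas F g N : measurable N -> mu N = 0 ->
  measurable_fun setT g -> (forall x, 0 <= g x) -> (forall x, 0 <= F x) ->
  (forall x, ~ N x -> g x <= F x) -> \int[mu]_x g x <= SS F.
Proof.
move=> mN N0 mg g0 F0 gF.
rewrite (@ge0_negligible_integral _ _ _ mu setT N g mN measurableT) //.
rewrite integral_mkcond integralSS.
have g'0 x : 0 <= (g \_ (setT `\` N)) x by rewrite patchE; case: ifP.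
have -> : SS (g \_ (setT `\` N))^\- = 0.
  apply: (@SS0 _ set0) => //.
  by move=> x _; rewrite funenegE ge_max lexx andbT leeNl oppe0.
rewrite sube0.
apply: le_ereal_sup => _ [h hF <-].
exists h => // x; apply: (le_trans (hF x)); rewrite funeposE ge_max F0 andbT.
rewrite patchE; case: ifPn => [/set_mem [_ Nx]|]; last by rewrite F0.
exact: gF.
Qed.
Arguments SS_ge_meas {F g N}.


Lemma le_any f g N : measurable N -> mu N = 0 ->
  measurable_fun setT g -> (forall x, 0 <= g x) ->
  (forall x, ~ N x -> f x <= g x) -> \int[mu]_x f x <= \int[mu]_x g x.
Proof.
move=> mN N0 mg g0 fg; rewrite integralSS.
apply: (@le_trans _ _ (SS f^\+)).
  by rewrite -[leRHS]sube0; apply: leeB => //; apply: SS_ge0 => x; exact: funeneg_ge0.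
apply: (SS_le_ae mN N0) => // x Nx.
by rewrite funeposE ge_max g0 andbT; exact: fg.
Qed.

Lemma SSneg0 f N : measurable N -> mu N = 0 ->
  (forall x, ~ N x -> 0 <= f x) -> SS f^\- = 0.
Proof.
move=> mN N0 f0; apply: (SS0 mN N0) => [x|x Nx]; first exact: funeneg_ge0.
by rewrite funenegE ge_max lexx andbT leeNl oppe0; exact: f0.
Qed.

Lemma ge_any f g N : measurable N -> mu N = 0 ->
  measurable_fun setT g -> (forall x, 0 <= g x) ->
  (forall x, ~ N x -> g x <= f x) -> \int[mu]_x g x <= \int[mu]_x f x.
Proof.
move=> mN N0 mg g0 gf; rewrite [leRHS]integralSS (@SSneg0 _ N) // ?sube0; last first.
  by move=> x Nx; exact: le_trans (g0 x) (gf x Nx).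
apply: (SS_ge_meas mN N0) => //.
by move=> x Nx; rewrite funeposE le_max gf.
Qed.

Lemma SS_split F G g A N : measurable N -> mu N = 0 -> measurable A ->
  measurable_fun setT g -> (forall x, 0 <= g x) -> (forall x, 0 <= G x) ->
  (forall x, ~ N x -> ~ A x -> F x <= g x) ->
  (forall x, ~ N x -> A x -> F x <= G x) ->
  SS F <= \int[mu]_x g x + SS G.
Proof.
move=> mN N0 mA mg g0 G0 Fg FG; apply: ub_ereal_sup => _ [h hF <-].
have := integral_nnsfun mu measurableT h; rewrite patch_setT => <-.
have mh := mfunE h.
have -> : \int[mu]_x (h x)%:E =
    \int[mu]_(x in A) (h x)%:E + \int[mu]_(x in ~` A) (h x)%:E.
  rewrite -integral_setU ?setUCr //; first exact: measurableC.
  exact/disj_set2P/setICr.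
rewrite addeC; apply: leeD.
- apply: (@le_trans _ _ (\int[mu]_(x in ~` A) g x)).
    apply: ae_ge0_le_integral => //.
    + exact: measurableC.
    + by move=> x _; rewrite lee_fin; exact: fun_ge0.
    + exact: measurable_funS mh.
    + exact: measurable_funS mg.
    exists N; split => // x /= nP; apply: contrapT => Nx.
    by apply: nP => nA; exact: le_trans (hF x) (Fg x Nx nA).
  by apply: ge0_subset_integral => //; exact: measurableC.
- rewrite integral_mkcond; apply: (SS_ge_meas mN N0) => //.
  + by apply/(measurable_restrictT _ _).1 => //; exact: measurable_funS mh.
  + by move=> x; rewrite patchE; case: ifP => // _; rewrite lee_fin; exact: fun_ge0.
  + move=> x Nx; rewrite patchE; case: ifPn => [/set_mem Ax|_]; last exact: G0.
    exact: le_trans (hF x) (FG x Nx Ax).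
Qed.

End Inner.
Section Model.
Variable R : realType.
Variables (nu : word -> nat) (G : word -> R).
Hypothesis HG : forall x, 1 < G x.

Let DD x := G x - 1 + \sum_(i < nu x) G (rcons x i).

Lemma DD_gt0 x : 0 < DD x.
Proof.
rewrite /DD; apply: ltr_wpDr; first by apply: sumr_ge0 => i _; exact: ltW (lt_trans ltr01 (HG _)).
by rewrite subr_gt0.
Qed.

Lemma coef_sum x : (G x - 1) / DD x + \sum_(i < nu x) (G (rcons x i) / DD x) = 1.
Proof.
by rewrite -mulr_suml -mulrDl divff // gt_eqF // DD_gt0.
Qed.

Lemma hitp_bnd n v : 0 <= hitp nu G n v <= 1.
Proof.
elim: n v => [|n IH] [x|] //=; rewrite ?lexx ?ler01 //.
have hD := DD_gt0 x.
have G1 : 0 <= G x - 1 by rewrite subr_ge0 ltW.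
have Gi i : 0 <= G (rcons x i) by apply: ltW (lt_trans ltr01 (HG _)).
have I0 v : 0 <= hitp nu G n v by case/andP: (IH v).
have I1 v : hitp nu G n v <= 1 by case/andP: (IH v).
have c0 : 0 <= (G x - 1) / DD x by apply: divr_ge0 => //; exact: ltW.
have ci i : 0 <= G (rcons x i) / DD x by apply: divr_ge0 => //; exact: ltW.
apply/andP; split.
  apply: addr_ge0; first exact: mulr_ge0.
  by apply: sumr_ge0 => i _; apply: mulr_ge0.
apply: (@le_trans _ _ ((G x - 1) / DD x + \sum_(i < nu x) (G (rcons x i) / DD x))); last by rewrite coef_sum.
apply: lerD; first by rewrite ler_piMr.
by apply: ler_sum => i _; rewrite ler_piMr.
Qed.

Lemma hitp_mono n v : hitp nu G n v <= hitp nu G n.+1 v.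
Proof.
elim: n v => [|n IH] [x|] //=.
- by case/andP: (hitp_bnd 1 (Some x)).
- have hD := DD_gt0 x.
  have c0 : 0 <= (G x - 1) / DD x by apply: divr_ge0; [rewrite subr_ge0 ltW|exact: ltW].
  have ci i : 0 <= G (rcons x i) / DD x.
    by apply: divr_ge0; [exact: ltW (lt_trans ltr01 (HG _))|exact: ltW].
  apply: lerD; first exact: ler_wpM2l.
  by apply: ler_sum => i _; exact: ler_wpM2l.
Qed.

Lemma hitp_cvg v : cvgn (fun n => hitp nu G n v).
Proof.
apply: nondecreasing_is_cvgn.
  by apply/nondecreasing_seqP => n; exact: hitp_mono.
by exists 1 => _ [n _ <-]; case/andP: (hitp_bnd n v).
Qed.

Lemma lim_bnd v : 0 <= limn (fun n => hitp nu G n v) <= 1.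
Proof.
apply/andP; split.
  apply: le_trans (nondecreasing_cvgn_le _ (hitp_cvg v) 0).
    by case/andP: (hitp_bnd 0 v).
  by apply/nondecreasing_seqP => n; exact: hitp_mono.
apply: limr_le; first exact: hitp_cvg.
by apply: nearW => n; case/andP: (hitp_bnd n v).
Qed.

Definition gprod (x : word) : R := \prod_(k < (size x).+1) (1 - (G (take k x))^-1).

Lemma gprod_rcons y a : gprod (rcons y a) = gprod y * (1 - (G (rcons y a))^-1).
Proof.
rewrite /gprod size_rcons big_ord_recr /=; congr (_ * _).
  apply: eq_bigr => i _; congr (1 - (G _)^-1).
  by rewrite -cats1 takel_cat // -ltnS.
by rewrite -(size_rcons y a) take_size.
Qed.

Lemma gfac_ge0 x : 0 <= 1 - (G x)^-1.
Proof.
rewrite subr_ge0 invf_le1 //; [exact: ltW|exact: lt_trans ltr01 (HG _)].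
Qed.

Lemma gprod_ge0 x : 0 <= gprod x.
Proof. by apply: prodr_ge0 => i _; exact: gfac_ge0. Qed.

Definition gg (v : option word) : R := if v is Some x then gprod x else 1.

Lemma gg_parent x : gg (parent x) * (1 - (G x)^-1) = gprod x.
Proof.
case/lastP: x => [|y a].
  by rewrite /= /gprod big_ord1 take0 mul1r.
have -> : parent (rcons y a) = Some y.
  rewrite /parent; case E: (rcons y a) => [|b s]; first by case: y E.
  by rewrite -E size_rcons /= -cats1 take_size_cat.
by rewrite gprod_rcons.
Qed.

Hypothesis Hnu : forall x, (0 < nu x)%N.

Lemma hitp_gg n v : hitp nu G n v <= gg v.
Proof.
elim: n v => [|n IH] [x|] //=; first exact: gprod_ge0.
have hD := DD_gt0 x.
have Gx0 : 0 < G x by exact: lt_trans ltr01 (HG _).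
have c0 : 0 <= (G x - 1) / DD x by apply: divr_ge0; [rewrite subr_ge0 ltW|exact: ltW].
have ci i : 0 <= G (rcons x i) / DD x.
  by apply: divr_ge0; [exact: ltW (lt_trans ltr01 (HG _))|exact: ltW].
apply: (@le_trans _ _ ((G x - 1) / DD x * gg (parent x) +
   \sum_(i < nu x) (G (rcons x i) / DD x * (gprod x * (1 - (G (rcons x i))^-1))))).
  apply: lerD; first exact: ler_wpM2l.
  apply: ler_sum => i _; apply: ler_wpM2l => //.
  by rewrite -gprod_rcons; exact: (IH (Some (rcons x i))).
have hp : gg (parent x) = gprod x * G x / (G x - 1).
  rewrite -gg_parent; set q := gg (parent x).
  have G10 : G x - 1 != 0 by rewrite subr_eq0 gt_eqF.
  have Gx00 : G x != 0 by rewrite gt_eqF.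
  by field; rewrite G10 Gx00.
rewrite hp.
have -> : \sum_(i < nu x) (G (rcons x i) / DD x * (gprod x * (1 - (G (rcons x i))^-1)))
   = gprod x / DD x * \sum_(i < nu x) (G (rcons x i) - 1).
  rewrite mulr_sumr; apply: eq_bigr => i _.
  have Gi0 : G (rcons x i) != 0 by rewrite gt_eqF // (lt_trans ltr01 (HG _)).
  by field; rewrite Gi0 gt_eqF.
rewrite sumrB sumr_const card_ord.
set SG := \sum_(i < nu x) G (rcons x i).
have eD : DD x = G x - 1 + SG by [].
have G10 : G x - 1 != 0 by rewrite subr_eq0 gt_eqF.
have -> : (G x - 1) / DD x * (gprod x * G x / (G x - 1)) +
    gprod x / DD x * (SG - 1 *+ nu x) = gprod x / DD x * (G x + SG - (nu x)%:R).
  by field; rewrite G10 gt_eqF.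
rewrite -[leRHS]mulr1 -mulrA; apply: ler_wpM2l; first exact: gprod_ge0.
rewrite ler_pdivrMl // mulr1 eD.
have : 1 <= (nu x)%:R :> R by rewrite (ler_nat R 1) Hnu.
lra.
Qed.

Lemma phi_ge1 : 1 <= phi nu G.
Proof.
have l1 : limn (fun n => hitp nu G n (Some [::])) <= 1 - (G [::])^-1.
  apply: limr_le; first exact: hitp_cvg.
  apply: nearW => n; have := hitp_gg n (Some [::]).
  by rewrite /= /gprod big_ord1 take0.
have G0 : 0 < G [::] by exact: lt_trans ltr01 (HG _).
rewrite /phi /beta; set l := limn _ in l1 *.
have G00 : G [::] != 0 by rewrite gt_eqF.
apply: (@le_trans _ _ (G [::] * (G [::])^-1)); first by rewrite mulfV.
apply: ler_wpM2l; first exact: ltW.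
move: l1; set a := (G [::])^-1; lra.
Qed.

Lemma phi_le : phi nu G <= G [::].
Proof.
have G0 : 0 < G [::] by exact: lt_trans ltr01 (HG _).
rewrite /phi /beta -[leRHS]mulr1; apply: ler_wpM2l; first exact: ltW.
by rewrite lerBlDr lerDl; case/andP: (lim_bnd (Some [::])).
Qed.

End Model.

Lemma Ssum_ge1 (R : realType) (nu : word -> nat) (G : word -> R) :
  (forall x, 1 < G x) -> (forall x, (0 < nu x)%N) -> 1 <= Ssum nu G.
Proof.
move=> HG Hnu; rewrite /Ssum.
have n0 := Hnu [::].
case E: (nu [::]) n0 => [//|m] _.
rewrite big_ord_recl -[leLHS]addr0; apply: lerD.
  by apply: phi_ge1 => [y|y]; [exact: HG|exact: Hnu].
apply: sumr_ge0 => i _; apply: le_trans ler01 _.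
by apply: phi_ge1 => [y|y]; [exact: HG|exact: Hnu].
Qed.

Lemma kap_int (R : realType) (u S : R) : 1 <= u -> 1 <= S ->
  2^-1 <= u * S / (u - 1 + S) <= u.
Proof.
move=> u1 S1; have D0 : 0 < u - 1 + S by lra.
apply/andP; split.
  rewrite ler_pdivlMr //; nra.
rewrite ler_pdivrMr //; nra.
Qed.

Theorem mainTheorem7 (R : realType) (d : measure_display) (Omega : measurableType d)
  (P : probability Omega R) (p : nat -> R) (mu : probability R R)
  (nu : word -> Omega -> nat) (G : word -> Omega -> R) :
  (* reproduction law p with p_0 = 0, p_1 < 1 *)
  (forall k, 0 <= p k) ->
  (\sum_(k <oo) (p k)%:E = 1)%E ->
  p 0%N = 0 -> p 1%N < 1 ->
  (* Gamma takes values in (1, oo) *)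
  (forall x w, 1 < G x w) ->
  (* measurability of the labels *)
  (forall x k, measurable [set w | nu x w = k]) ->
  (forall x, measurable_fun setT (G x)) ->
  (* (Gamma, p)-Galton-Watson tree *)
  iid_marked_GW P p mu nu G ->
  (* E[kappa(phi(T))] < oo and sum_k p_k k < oo *)
  (\int[P]_w kappa P nu G (phi (fun x => nu x w) (fun x => G x w)) < +oo)%E ->
  (\sum_(k <oo) (k%:R * p k)%:E < +oo)%E ->
  ((\int[P]_w ((- ln (1 - (G [::] w)^-1))%:E
                * kappa P nu G (phi (fun x => nu x w) (fun x => G x w))) < +oo)%E
   <-> (\int[P]_w (- ln (1 - (G [::] w)^-1))%:E < +oo)%E).
Proof.
move=> p0 psum p00 p1 HG mnu mG iid HK Hm.
pose B n : set Omega :=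
  if @unpickle word n is Some x then [set w | nu x w = 0%N] else set0.
pose N := \bigcup_n B n.
have mB n : measurable (B n) by rewrite /B; case: unpickle => //= x; exact: mnu.
have mN : measurable N by apply: bigcupT_measurable => k; exact: mB.
have PB x : P [set w | nu x w = 0%N] = 0%E.
  have H := iid 1%N (fun _ => x) (fun _ => 0%N) (fun _ => setT).
  rewrite big_ord1 p00 mul0r in H.
  rewrite (_ : [set w | nu x w = 0%N] = \bigcap_(i in [set: 'I_1])
     [set w | nu ((fun _ => x) i) w = (fun _ => 0%N) i /\ G ((fun _ => x) i) w \in (fun _ => setT) i]).
    rewrite H //; first by move=> i j _; rewrite !ord1.
  apply/seteqP; split => w /=.
    by move=> H0 i _; split => //; rewrite in_setT.
  by move=> H0; case: (H0 ord0).
have N0 : P N = 0%E.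
  have [A [mA PA NA]] : P.-negligible N.
    apply: negligible_bigcup => k; exists (B k); split => //.
    rewrite /B; case: unpickle => [x|]; [exact: PB|exact: measure0].
  apply/eqP; rewrite eq_le measure_ge0 andbT -PA.
  by apply: le_measure => //; rewrite inE.
have notN w : ~ N w -> forall x, (0 < nu x w)%N.
  move=> Nw x; rewrite lt0n; apply/negP => /eqP H; apply: Nw.
  by exists (pickle x) => //; rewrite /B pickleK.
have icst (c : \bar R) : (\int[P]_x (cst c x) = c)%E.
  rewrite integral_cst //; transitivity (c * 1)%E; last exact: mule1.
  by congr (_ * _)%E; exact: probability_setT.
have kap u : 1 <= u -> ((2^-1)%:E <= kappa P nu G u <= u%:E)%E.
  move=> u1.
  pose f := fun w => (u * Ssum (fun x => nu x w) (fun x => G x w)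
               / (u - 1 + Ssum (fun x => nu x w) (fun x => G x w)))%:E.
  have fb w : ~ N w -> ((2^-1)%:E <= f w <= u%:E)%E.
    move=> Nw; rewrite /f !lee_fin.
    apply: kap_int u1 _; apply: Ssum_ge1 => // x; exact: notN.
  apply/andP; split.
    apply: le_trans (@ge_any R _ Omega P f (cst (2^-1)%:E) N mN N0 _ _ _).
    - by rewrite icst.
    - exact: measurable_cst.
    - by move=> _ /=; rewrite lee_fin invr_ge0 ler0n.
    - by move=> w Nw /=; case/andP: (fb w Nw).
  apply: le_trans (@le_any R _ Omega P f (cst u%:E) N mN N0 _ _ _) _.
  - exact: measurable_cst.
  - by move=> _ /=; rewrite lee_fin; lra.
  - by move=> w Nw /=; case/andP: (fb w Nw).
  - by rewrite icst.
pose Lr w := - ln (1 - (G [::] w)^-1).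
have mLr : measurable_fun setT Lr.
  apply: (eq_measurable_fun (fun w => ln (G [::] w) - ln (G [::] w - 1))).
    by move=> w _; rewrite /Lr Lr_eq.
  apply: measurable_funB; apply: measurableT_comp; first exact: measurable_ln.
  - exact: mG.
  - exact: measurable_ln.
  - by apply: measurable_funB => //; exact: mG.
have mL : measurable_fun setT (fun w => (Lr w)%:E).
  exact: (measurable_EFinP setT Lr).2 mLr.
have Lr0 w : 0 <= Lr w by exact: Lr_ge0.
pose K w := kappa P nu G (phi (fun x => nu x w) (fun x => G x w)).
have Kb w : ~ N w -> ((2^-1)%:E <= K w <= (G [::] w)%:E)%E.
  move=> Nw.
  have Hnu x : (0 < nu x w)%N by exact: notN.
  have HG' x : 1 < G x w by exact: HG.
  have := kap _ (@phi_ge1 R _ _ HG' Hnu); case/andP => k1 k2.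
  rewrite k1 /=; apply: le_trans k2 _; rewrite lee_fin.
  exact: (@phi_le R _ _ HG').
have K0 w : ~ N w -> (0 <= K w)%E.
  move=> Nw; case/andP: (Kb w Nw) => k1 _; apply: le_trans k1.
  by rewrite lee_fin invr_ge0 ler0n.
have iL2 : (\int[P]_w ((2 * Lr w)%:E) = 2%:E * \int[P]_w (Lr w)%:E)%E.
  transitivity (\int[P]_w ((2)%:E * (Lr w)%:E))%E.
    by apply: eq_integral => w _; rewrite EFinM.
  rewrite ge0_integralZl_EFin //.
  all: try by move=> w _; have := Lr0 w; rewrite -lee_fin => h; exact: h.
  all: try by rewrite ?invr_ge0 ?ler0n.
have iL12 : (\int[P]_w ((2^-1 * Lr w)%:E) = (2^-1)%:E * \int[P]_w (Lr w)%:E)%E.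
  transitivity (\int[P]_w ((2^-1)%:E * (Lr w)%:E))%E.
    by apply: eq_integral => w _; rewrite EFinM.
  rewrite ge0_integralZl_EFin //.
  all: try by move=> w _; have := Lr0 w; rewrite -lee_fin => h; exact: h.
  all: try by rewrite ?invr_ge0 ?ler0n.
split => [HLK|HL].
  have H2 : (\int[P]_w ((2^-1 * Lr w)%:E) <= \int[P]_w ((Lr w)%:E * K w))%E.
    apply: (@ge_any R _ Omega P (fun w => (Lr w)%:E * K w)%E (fun w => (2^-1 * Lr w)%:E) N mN N0).
    - apply/measurable_EFinP; apply: measurable_funM => //; exact: measurable_cst.
    - by move=> w; rewrite lee_fin mulr_ge0 ?Lr0 // ?invr_ge0 ?ler0n.
    - move=> w Nw; rewrite EFinM muleC; case/andP: (Kb w Nw) => k1 _.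
      by apply: lee_pmul => //; rewrite ?lee_fin ?invr_ge0 ?ler0n ?Lr0.
  rewrite iL12 in H2.
  have H3 := le_lt_trans H2 HLK.
  have I0 : (0 <= \int[P]_w (Lr w)%:E)%E by apply: integral_ge0 => w _; have := Lr0 w; rewrite -lee_fin => h; exact: h.
  apply: (@le_lt_trans _ _ (2%:E * ((2^-1)%:E * \int[P]_w (Lr w)%:E))%E).
    by rewrite muleA -EFinM mulfV ?mul1e // pnatr_eq0.
  by apply: lte_mul_pinfty.
pose F w := ((Lr w)%:E * K w)%E.
pose A := G [::] @^-1` `]2, +oo[%classic.
have mA : measurable A.
  by rewrite /A -[X in measurable X]setTI; apply: mG => //; exact: measurable_itv.
have HF : (@SS R _ Omega P F^\+ <= \int[P]_w ((2 * Lr w)%:E) + @SS R _ Omega P K^\+)%E.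
  apply: (@SS_split R _ Omega P (F^\+)%E (K^\+)%E (fun w => (2 * Lr w)%:E) A N mN N0 mA).
  - apply/measurable_EFinP; apply: measurable_funM => //; exact: measurable_cst.
  - by move=> w; rewrite lee_fin mulr_ge0 ?Lr0.
  - by move=> w; exact: funepos_ge0.
  - move=> w Nw nA; rewrite funeposE ge_max lee_fin mulr_ge0 ?Lr0 // andbT.
    have G2 : G [::] w <= 2.
      by rewrite leNgt; apply/negP => h; apply: nA; rewrite /A /= in_itv /= h.
    have k0 := K0 w Nw; case/andP: (Kb w Nw) => _ h.
    have h2 : (K w <= 2%:E)%E by apply: le_trans h _; rewrite lee_fin.
    rewrite /F EFinM muleC; apply: lee_pmul => //; rewrite ?lee_fin ?Lr0 //.
  - move=> w Nw Aw; rewrite funeposE ge_max funepos_ge0 andbT.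
    rewrite funeposE le_max; apply/orP; left.
    have k0 := K0 w Nw.
    rewrite /F -[leRHS]mul1e; apply: lee_pmul => //; rewrite ?lee_fin ?Lr0 //.
    apply: Lr_le1.
    by move: Aw; rewrite /A /= in_itv /= andbT.
have HK' : @SS R _ Omega P (K^\+)%E = (\int[P]_w K w)%E.
  by rewrite integralSS (@SSneg0 R _ Omega P K N) // sube0.
have HLK : (\int[P]_w F w <= @SS R _ Omega P F^\+)%E.
  rewrite integralSS -[leRHS]sube0; apply: leeB => //.
  by apply: SS_ge0 => x; exact: funeneg_ge0.
apply: le_lt_trans HLK _; apply: le_lt_trans HF _.
rewrite HK' iL2; apply: lte_add_pinfty => //.
by apply: lte_mul_pinfty.
Qed.
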